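(* Suppose $x^\dagger\neq0$ satisfies the source condition $x^\dagger=(A^*A)^\mu\omega$ with $\|\omega\|\le C_s$ and $0<\mu\le1$. Then there is a constant $C$ (depending on $\mu$, $C_s$, $\alpha_{\max}$ and $\|A\|$) such that for all $\alpha\in(0,\alpha_{\max})$ $$\|x_\alpha-x^\dagger\|\le\frac{C}{\|A^*Ax^\dagger\|^{2\mu}}\,\psi_{SL}(\alpha,x^\dagger)^{2\mu}.$$
   Context: Let $X,Y$ be real Hilbert spaces and $A:X\to Y$ a compact linear operator with singular system $(\sigma_i,u_i,v_i)_i$, $\sigma_i>0$; put $\lambda_i=\sigma_i^2$. Let $x^\dagger\in N(A)^\perp$ (minimum-norm solution), $y=Ax^\dagger$, $x_\alpha=(A^*A+\alpha I)^{-1}A^*y$, $\alpha_{\max}>0$ fixed, and $\psi_{SL}(\alpha,x^\dagger):=\Big(\sum_i\frac{\alpha\lambda_i^2}{(\lambda_i+\alpha)^3}|\langle x^\dagger,u_i\rangle|^2\Big)^{1/2}$. *)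

(* Defs.v *)
From Stdlib Require Import Reals Lra.
Open Scope R_scope.

(* The compact operator A : X -> Y with
   singular system (sigma_i, u_i, v_i)_i is represented by the sequence
   sigma : nat -> R of its singular values; an element x of N(A)^perp is
   represented by its coefficient sequence c i = <x, u_i>.  lambda_i = sigma_i^2. *)

Definition lam (sigma : nat -> R) (i : nat) : R := (sigma i)^2.

(* coefficients of x_alpha = (A^*A + alpha I)^{-1} A^* A x  in the basis u_i *)
Definition tik_coef (sigma : nat -> R) (c : nat -> R) (alpha : R) (i : nat) : R :=
  lam sigma i / (lam sigma i + alpha) * c i.

Definition err_term (sigma c : nat -> R) (alpha : R) (i : nat) : R :=
  (tik_coef sigma c alpha i - c i)^2.

(* terms of psi_SL(alpha, x)^2 *)
Definition psiSL_term (sigma c : nat -> R) (alpha : R) (i : nat) : R :=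
  alpha * (lam sigma i)^2 / (lam sigma i + alpha)^3 * (c i)^2.

Definition AsA_term (sigma c : nat -> R) (i : nat) : R :=
  (lam sigma i * c i)^2.

Definition norm_term (c : nat -> R) (i : nat) : R := (c i)^2.

(* ||A|| is the supremum of the singular values *)
Definition opnorm_is (sigma : nat -> R) (nA : R) : Prop :=
  is_lub (fun r => exists i, r = sigma i) nA.

(* Main.v *)
Require Import Defs.
From Stdlib Require Import Reals Lra.
Open Scope R_scope.

Lemma cst_cv (k : R) : Un_cv (fun _ => k) k.
Proof. intros eps He; exists 0%nat; intros n _; unfold R_dist; rewrite Rminus_diag, Rabs_R0; lra. Qed.

Lemma sum_le_scaled (f g : nat -> R) (k lf lg : R) :
  (forall i, f i <= k * g i) -> infinite_sum f lf -> infinite_sum g lg -> lf <= lg * k.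
Proof.
  intros H Hf Hg.
  apply (Rle_cv_lim (Un:=sum_f_R0 f) (Vn:=fun n => sum_f_R0 g n * k)).
  - intros n. rewrite Rmult_comm, scal_sum. apply sum_growing. intros i. rewrite Rmult_comm. apply H.
  - exact Hf.
  - apply CV_mult; [exact Hg | apply cst_cv].
Qed.

Lemma sum_ge_term (f : nat -> R) (l : R) :
  (forall i, 0 <= f i) -> infinite_sum f l -> forall i, f i <= l.
Proof.
  intros H Hf i.
  assert (Hg : Un_growing (sum_f_R0 f)).
  { intros n. simpl. specialize (H (S n)). lra. }
  pose proof (growing_ineq _ _ Hg Hf i) as Hi.
  destruct i as [|i]; simpl in *; [lra|].
  pose proof (cond_pos_sum f i H). lra.
Qed.

Lemma key_ineq (alpha lam mu : R) : 0 < alpha -> 0 < lam -> 0 < mu -> mu <= 1 ->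
  alpha * Rpower lam mu <= Rpower alpha mu * (lam + alpha).
Proof.
  intros Ha Hl Hm Hm1.
  assert (Pa : 0 < Rpower alpha mu) by apply exp_pos.
  assert (Pl : 0 < Rpower lam mu) by apply exp_pos.
  destruct (Rle_or_lt lam alpha) as [Hle|Hlt].
  - assert (Rpower lam mu <= Rpower alpha mu) by (apply Rle_Rpower_l; lra).
    nra.
  - assert (E1 : alpha = Rpower alpha mu * Rpower alpha (1 - mu)).
    { rewrite <- Rpower_plus. replace (mu + (1 - mu)) with 1 by ring. now rewrite Rpower_1. }
    assert (E2 : lam = Rpower lam mu * Rpower lam (1 - mu)).
    { rewrite <- Rpower_plus. replace (mu + (1 - mu)) with 1 by ring. now rewrite Rpower_1. }
    assert (H3 : Rpower alpha (1 - mu) <= Rpower lam (1 - mu)) by (apply Rle_Rpower_l; lra).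
    assert (alpha * Rpower lam mu <= Rpower alpha mu * lam).
    { rewrite E1 at 1. rewrite E2 at 2.
      assert (0 <= Rpower alpha mu * Rpower lam mu) by nra.
      assert (0 <= (Rpower alpha mu * Rpower lam mu) * (Rpower lam (1 - mu) - Rpower alpha (1 - mu))) by (apply Rmult_le_pos; lra).
      nra. }
    nra.
Qed.

Theorem mainTheorem5 :
  forall (mu Cs alpha_max nA : R),
    0 < mu -> mu <= 1 -> 0 < alpha_max ->
    exists C : R,
      forall (sigma c : nat -> R),
        (* singular system of a compact operator with ||A|| = nA *)
        (forall i, 0 < sigma i) ->
        Un_cv sigma 0 ->
        opnorm_is sigma nA ->
        (* x^dagger in N(A)^perp with coefficients c, x^dagger <> 0 *)
        (exists Nx, infinite_sum (norm_term c) Nx) ->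
        (exists i, c i <> 0) ->
        (* source condition x^dagger = (A^*A)^mu omega, ||omega|| <= Cs *)
        (exists (w : nat -> R) (Nw : R),
            infinite_sum (norm_term w) Nw /\ sqrt Nw <= Cs /\
            forall i, c i = Rpower (lam sigma i) mu * w i) ->
        forall alpha E S P : R,
          0 < alpha -> alpha < alpha_max ->
          infinite_sum (err_term sigma c alpha) E ->     (* E = ||x_alpha - x^dagger||^2 *)
          infinite_sum (psiSL_term sigma c alpha) S ->   (* S = psi_SL(alpha,x^dagger)^2 *)
          infinite_sum (AsA_term sigma c) P ->           (* P = ||A^*A x^dagger||^2 *)
          sqrt E <= C / Rpower (sqrt P) (2 * mu) * Rpower (sqrt S) (2 * mu).
Proof.
  intros mu Cs am nA Hmu Hmu1 Ham.
  set (K := (nA ^ 2 + am) ^ 3).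
  exists (Cs * Rpower K mu).
  intros sigma c Hs Hcv Hop [Nx HNx] [i0 Hi0] [w [Nw [HNw [HCs Hcw]]]]
    alpha E S P Ha Haa HE HS HP.
  assert (Hsn : forall i, sigma i <= nA) by (intros i; apply (proj1 Hop); exists i; reflexivity).
  assert (HnA : 0 < nA) by (specialize (Hs 0%nat); specialize (Hsn 0%nat); lra).
  assert (Hlpos : forall i, 0 < lam sigma i).
  { intros i; unfold lam; specialize (Hs i); nra. }
  assert (Hlle : forall i, lam sigma i <= nA ^ 2).
  { intros i; unfold lam; specialize (Hs i); specialize (Hsn i); nra. }
  assert (HKpos : 0 < K) by (unfold K; apply pow_lt; nra).
  assert (Pa : 0 < Rpower alpha mu) by apply exp_pos.
  assert (HE1 : E <= Nw * (Rpower alpha mu ^ 2)).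
  { refine (sum_le_scaled _ (norm_term w) _ _ _ _ HE HNw).
    intros i. unfold err_term, tik_coef, norm_term. rewrite Hcw.
    set (l := lam sigma i). set (r := Rpower l mu).
    assert (Hl := Hlpos i). fold l in Hl.
    assert (Hk := key_ineq alpha l mu Ha Hl Hmu Hmu1). fold r in Hk.
    assert (Hr : 0 < r) by apply exp_pos.
    replace (l / (l + alpha) * (r * w i) - r * w i) with (- (alpha * r / (l + alpha)) * w i)
      by (field; lra).
    assert (H1 : alpha * r / (l + alpha) <= Rpower alpha mu).
    { apply (Rmult_le_reg_r (l + alpha)); [lra|].
      unfold Rdiv. rewrite Rmult_assoc, Rinv_l by lra. lra. }
    assert (H2 : 0 <= alpha * r / (l + alpha)).
    { apply Rlt_le, Rdiv_lt_0_compat; nra. }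
    assert (H3 : 0 <= w i ^ 2) by nra.
    assert (H4: (alpha * r / (l + alpha)) ^2 <= Rpower alpha mu ^2) by nra.
    replace ((- (alpha * r / (l + alpha)) * w i) ^ 2) with ((alpha * r / (l + alpha)) ^2 * w i ^ 2) by ring.
    nra. }
  assert (HNw0 : 0 <= Nw).
  { pose proof (sum_ge_term (norm_term w) Nw (fun i => pow2_ge_0 (w i)) HNw 0%nat).
    unfold norm_term in H. pose proof (pow2_ge_0 (w 0%nat)). lra. }
  assert (Hsq := sqrt_sqrt Nw HNw0).
  assert (Hsq0 := sqrt_pos Nw).
  assert (HCs0 : 0 <= Cs) by lra.
  assert (HNC : Nw <= Cs * Cs) by nra.
  assert (HE2 : E <= (Rpower alpha mu * Cs) ^ 2).
  { assert (0 <= Rpower alpha mu ^ 2) by nra.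
    assert (Nw * Rpower alpha mu ^ 2 <= (Cs * Cs) * Rpower alpha mu ^ 2) by (apply Rmult_le_compat_r; lra).
    replace ((Rpower alpha mu * Cs) ^ 2) with ((Cs * Cs) * Rpower alpha mu ^ 2) by ring. lra. }
  assert (HE3 : sqrt E <= Rpower alpha mu * Cs).
  { apply Rle_trans with (sqrt ((Rpower alpha mu * Cs) ^ 2)).
    - now apply sqrt_le_1_alt.
    - rewrite sqrt_pow2; [lra | nra]. }
  assert (HPS : P <= S * (K / alpha)).
  { refine (sum_le_scaled _ (psiSL_term sigma c alpha) _ _ _ _ HP HS).
    intros i. unfold AsA_term, psiSL_term.
    set (l := lam sigma i).
    assert (Hl := Hlpos i). assert (Hl2 := Hlle i). fold l in Hl, Hl2.
    assert (Hk : (l + alpha) ^ 3 <= K).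
    { unfold K. apply pow_incr. lra. }
    assert (Hq : 0 < (l + alpha) ^ 3) by (apply pow_lt; lra).
    replace (K / alpha * (alpha * l ^ 2 / (l + alpha) ^ 3 * c i ^ 2))
      with (K / (l + alpha) ^ 3 * (l * c i) ^ 2) by (field; lra).
    assert (1 <= K / (l + alpha) ^ 3).
    { apply (Rmult_le_reg_r ((l + alpha) ^ 3)); [lra|].
      unfold Rdiv. rewrite Rmult_assoc, Rinv_l by lra. lra. }
    pose proof (pow2_ge_0 (l * c i)). nra. }
  assert (HP0 : 0 < P).
  { assert (H0 : forall i, 0 <= AsA_term sigma c i) by (intros; apply pow2_ge_0).
    pose proof (sum_ge_term _ _ H0 HP i0).
    unfold AsA_term in H.
    assert (lam sigma i0 * c i0 <> 0).
    { apply Rmult_integral_contrapositive; split; [specialize (Hlpos i0); lra | exact Hi0]. }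
    pose proof (Rsqr_pos_lt _ H1). unfold Rsqr in H2. simpl in H. lra. }
  assert (HKa : 0 < K / alpha) by (apply Rdiv_lt_0_compat; lra).
  assert (HS0 : 0 < S).
  { destruct (Rle_or_lt S 0) as [h|h]; [|exact h]. nra. }
  assert (HSP : 0 < S / P) by (apply Rdiv_lt_0_compat; lra).
  assert (Hal : alpha <= K * (S / P)).
  { apply (Rmult_le_reg_r (P / alpha)). apply Rdiv_lt_0_compat; lra.
    replace (alpha * (P / alpha)) with P by (field; lra).
    replace (K * (S / P) * (P / alpha)) with (S * (K / alpha)) by (field; lra). lra. }
  assert (Hpw : Rpower alpha mu <= Rpower K mu * Rpower (S / P) mu).
  { rewrite Rpower_mult_distr by lra. apply Rle_Rpower_l; lra. }
  assert (HSPe : Rpower (S / P) mu * Rpower P mu = Rpower S mu).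
  { rewrite Rpower_mult_distr by lra. f_equal. field. lra. }
  assert (Hsq2 : forall x, 0 < x -> Rpower (sqrt x) (2 * mu) = Rpower x mu).
  { intros x hx. rewrite <- Rpower_sqrt by exact hx. rewrite Rpower_mult. f_equal. field. }
  rewrite !Hsq2 by lra. rewrite <- HSPe.
  assert (HPp : 0 < Rpower P mu) by apply exp_pos.
  replace (Cs * Rpower K mu / Rpower P mu * (Rpower (S / P) mu * Rpower P mu))
    with (Cs * (Rpower K mu * Rpower (S / P) mu)) by (field; lra).
  apply Rle_trans with (Rpower alpha mu * Cs); [exact HE3|].
  rewrite Rmult_comm. apply Rmult_le_compat_l; lra.
Qed.
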